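(* Let $1\le p<\infty$. There exist a bilateral weighted backward shift $B$ on $\ell^p(\mathbb{Z})$ (i.e. $Be_n=\alpha_ne_{n-1}$ for a bounded complex sequence $(\alpha_n)_{n\in\mathbb{Z}}$) and a compact operator $K$ on $\ell^p(\mathbb{Z})$ such that $B+K$ is not hypercyclic, but $B+K$ has an orbit admitting a nonzero limit point (i.e. there are $u\in\ell^p(\mathbb{Z})$, $v\ne0$ and a strictly increasing $(n_k)$ with $(B+K)^{n_k}u\to v$ in norm).
   Context: $\{e_n\}_{n\in\mathbb{Z}}$ denotes the standard basis of $\ell^p(\mathbb{Z})$. An operator $T$ is hypercyclic if some orbit $\{T^ku:k\ge0\}$ is dense. *)

(* Defs.v *)
From Stdlib Require Import Reals ZArith.
From Coquelicot Require Import Coquelicot.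
Open Scope R_scope.

(* a^p for a >= 0, with the convention 0^p = 0 (p > 0). *)
Definition rpow (a p : R) : R := if Rle_dec a 0 then 0 else Rpower a p.

Definition seqZ := Z -> C.

(* symmetric partial sums  sum_{|n| <= N} |x_n|^p *)
Definition psum (p : R) (x : seqZ) (N : nat) : R :=
  sum_f_R0 (fun k => rpow (Cmod (x (Z.of_nat k - Z.of_nat N)%Z)) p) (2 * N).

Definition in_lp (p : R) (x : seqZ) : Prop :=
  exists M : R, forall N : nat, psum p x N <= M.

(* the l^p norm  (sum_n |x_n|^p)^(1/p)  (meaningful for x in l^p) *)
Definition lp_norm (p : R) (x : seqZ) : R :=
  rpow (real (Lim_seq (psum p x))) (/ p).

Definition sub_seq (x y : seqZ) : seqZ := fun n => Cminus (x n) (y n).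

(* operators act on sequences; only their action on l^p matters *)
Definition op := seqZ -> seqZ.

Definition op_add (S T : op) : op := fun x n => Cplus (S x n) (T x n).

Definition bounded_op (p : R) (T : op) : Prop :=
  (forall x, in_lp p x -> in_lp p (T x)) /\
  (forall (x y : seqZ) (a : C), in_lp p x -> in_lp p y ->
     forall n, T (fun m => Cplus (x m) (Cmult a (y m))) n
               = Cplus (T x n) (Cmult a (T y n))) /\
  (exists M : R, forall x, in_lp p x -> lp_norm p (T x) <= M * lp_norm p x).

(* compact operator: bounded linear, and the image of the unit ball is
   relatively compact (sequential form, l^p being a metric space) *)
Definition compact_op (p : R) (K : op) : Prop :=
  bounded_op p K /\
  forall xs : nat -> seqZ,
    (forall k, in_lp p (xs k) /\ lp_norm p (xs k) <= 1) ->
    exists (phi : nat -> nat) (y : seqZ),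
      (forall k, (phi k < phi (S k))%nat) /\ in_lp p y /\
      is_lim_seq (fun k => lp_norm p (sub_seq (K (xs (phi k))) y)) 0.

(* bilateral weighted backward shift: B e_n = alpha_n e_(n-1),
   i.e. (B x)_m = alpha_(m+1) x_(m+1) *)
Definition wshift (alpha : Z -> C) : op :=
  fun x m => Cmult (alpha (m + 1)%Z) (x (m + 1)%Z).

Definition hypercyclic (p : R) (T : op) : Prop :=
  exists u, in_lp p u /\
    forall v, in_lp p v -> forall eps : R, 0 < eps ->
      exists k : nat, lp_norm p (sub_seq (Nat.iter k T u) v) < eps.

(* Main.v *)
Require Import Defs.
From Stdlib Require Import Reals ZArith Lia Lra Psatz Classical ClassicalEpsilon FunctionalExtensionality.
From Coquelicot Require Import Coquelicot.
Open Scope R_scope.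

Ltac ceq := apply injective_projections; cbn; ring.

Lemma rpow_ge0 a p : 0 <= rpow a p.
Proof. unfold rpow; destruct Rle_dec; [lra|]. unfold Rpower; left; apply exp_pos. Qed.

Lemma rpow_0 p : rpow 0 p = 0.
Proof. unfold rpow; destruct Rle_dec; lra. Qed.

Lemma rpow_mono a b p : 0 < p -> a <= b -> rpow a p <= rpow b p.
Proof.
  intros hp hab. unfold rpow. destruct (Rle_dec a 0); destruct (Rle_dec b 0).
  - lra.
  - unfold Rpower; left; apply exp_pos.
  - lra.
  - apply Rle_Rpower_l; lra.
Qed.

Lemma rpow_mult a b p : 0 <= a -> 0 <= b -> rpow (a*b) p = rpow a p * rpow b p.
Proof.
  intros ha hb. destruct (Req_dec a 0) as [->|ha']. { rewrite Rmult_0_l, rpow_0; ring. }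
  destruct (Req_dec b 0) as [->|hb']. { rewrite Rmult_0_r, rpow_0; ring. }
  unfold rpow. destruct Rle_dec. { exfalso. assert (0 < a*b) by (apply Rmult_lt_0_compat; lra). lra. }
  destruct Rle_dec; [lra|]. destruct Rle_dec; [lra|].
  rewrite Rpower_mult_distr; lra.
Qed.

Lemma rpow_inv c p : 0 < p -> 0 <= c -> rpow (rpow c p) (/p) = c.
Proof.
  intros hp hc. destruct (Req_dec c 0) as [->|hc']. { rewrite !rpow_0; auto. }
  unfold rpow at 2. destruct Rle_dec; [lra|].
  unfold rpow. destruct Rle_dec as [h|h].
  { exfalso. unfold Rpower in h. pose proof (exp_pos (p * ln c)). lra. }
  rewrite Rpower_mult, Rinv_r by lra. apply Rpower_1; lra.
Qed.

Definition C2 p := rpow 2 p.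

Lemma rpow_add_le a b p : 0 < p -> 0 <= a -> 0 <= b ->
  rpow (a + b) p <= C2 p * (rpow a p + rpow b p).
Proof.
  intros hp ha hb. unfold C2.
  pose proof (rpow_ge0 a p). pose proof (rpow_ge0 b p). pose proof (rpow_ge0 2 p).
  destruct (Rle_dec a b).
  - apply Rle_trans with (rpow (2*b) p). apply rpow_mono; lra.
    rewrite rpow_mult by lra. nra.
  - apply Rle_trans with (rpow (2*a) p). apply rpow_mono; lra.
    rewrite rpow_mult by lra. nra.
Qed.

Lemma sum_ge_term (f : nat -> R) n k : (forall i, 0 <= f i) -> (k <= n)%nat -> f k <= sum_f_R0 f n.
Proof.
  intros hf. induction n; intros hk.
  - replace k with 0%nat by lia. simpl. lra.
  - simpl. destruct (Nat.eq_dec k (S n)) as [->|]. 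
    + pose proof (cond_pos_sum f n hf). lra.
    + pose proof (IHn ltac:(lia)). pose proof (hf (S n)). lra.
Qed.

Lemma sum_single (f : nat -> R) k0 : (forall k, k <> k0 -> f k = 0) ->
  forall n, sum_f_R0 f n = if Nat.leb k0 n then f k0 else 0.
Proof.
  intros hf. induction n.
  - simpl. destruct (Nat.leb_spec k0 0). replace k0 with 0%nat by lia; auto. apply hf; lia.
  - simpl. rewrite IHn. destruct (Nat.leb_spec k0 n); destruct (Nat.leb_spec k0 (S n)); try lia.
    + rewrite (hf (S n)) by lia. ring.
    + replace k0 with (S n) by lia. ring.
    + rewrite (hf (S n)) by lia. ring.
Qed.

Lemma sum_zero (f : nat -> R) n : (forall k, f k = 0) -> sum_f_R0 f n = 0.
Proof. intros h; induction n; simpl; rewrite ?IHn, h; ring. Qed.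

Lemma psum_ge0 p x N : 0 <= psum p x N.
Proof. apply cond_pos_sum; intros; apply rpow_ge0. Qed.

Definition single (j : Z) (a : C) : seqZ := fun n => if Z.eq_dec n j then a else 0%C.

Lemma psum_single p j a N : 0 < p -> psum p (single j a) N <= rpow (Cmod a) p.
Proof.
  intros hp. unfold psum.
  rewrite (sum_single _ (Z.to_nat (j + Z.of_nat N))).
  - destruct Nat.leb; [|apply rpow_ge0]. apply rpow_mono; auto.
    unfold single; destruct Z.eq_dec; [lra|]. rewrite Cmod_0. apply Cmod_ge_0.
  - intros k hk. unfold single. destruct Z.eq_dec; [lia|]. rewrite Cmod_0; apply rpow_0.
Qed.

Lemma psum_dom p x y z N : 0 < p ->
  (forall n, Cmod (y n) <= Cmod (x n) + Cmod (z n)) ->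
  psum p y N <= C2 p * (psum p x N + psum p z N).
Proof.
  intros hp h. unfold psum. rewrite <- plus_sum, scal_sum.
  apply sum_Rle; intros n _.
  apply Rle_trans with (rpow (Cmod (x (Z.of_nat n - Z.of_nat N)%Z) + Cmod (z (Z.of_nat n - Z.of_nat N)%Z)) p).
  apply rpow_mono; auto. rewrite Rmult_comm. apply rpow_add_le; auto; apply Cmod_ge_0.
Qed.

Lemma in_lp_dom p x y z : 0 < p -> in_lp p x -> in_lp p z ->
  (forall n, Cmod (y n) <= Cmod (x n) + Cmod (z n)) -> in_lp p y.
Proof.
  intros hp [M1 h1] [M2 h2] h. exists (C2 p * (M1 + M2)). intros N.
  eapply Rle_trans. apply psum_dom; eauto.
  apply Rmult_le_compat_l. apply rpow_ge0. specialize (h1 N); specialize (h2 N); lra.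
Qed.

Lemma in_lp_single p j a : 0 < p -> in_lp p (single j a).
Proof. intros hp. exists (rpow (Cmod a) p). intros; apply psum_single; auto. Qed.

Lemma sum_shift1 (f : nat -> R) n : sum_f_R0 f (S n) = f 0%nat + sum_f_R0 (fun k => f (S k)) n.
Proof. induction n; simpl in *. ring. rewrite IHn. ring. Qed.

Lemma psum_shift p x N : psum p (fun n => x (n + 1)%Z) N <= psum p x (S N).
Proof.
  unfold psum. replace (2 * S N)%nat with (S (S (2 * N))) by lia.
  rewrite !sum_shift1.
  assert (E : sum_f_R0 (fun k => rpow (Cmod (x (Z.of_nat (S (S k)) - Z.of_nat (S N))%Z)) p) (2*N)
     = sum_f_R0 (fun k => rpow (Cmod (x (Z.of_nat k - Z.of_nat N + 1)%Z)) p) (2*N)).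
  { apply sum_eq; intros. f_equal. f_equal. f_equal. lia. }
  rewrite E. pose proof (rpow_ge0 (Cmod (x (Z.of_nat 0 - Z.of_nat (S N))%Z)) p).
  pose proof (rpow_ge0 (Cmod (x (Z.of_nat 1 - Z.of_nat (S N))%Z)) p). lra.
Qed.

Lemma in_lp_shift p x : in_lp p x -> in_lp p (fun n => x (n + 1)%Z).
Proof. intros [M h]. exists M. intros N. eapply Rle_trans. apply psum_shift. apply h. Qed.

Lemma in_lp_sub p x y : 0 < p -> in_lp p x -> in_lp p y -> in_lp p (sub_seq x y).
Proof.
  intros hp hx hy. apply (in_lp_dom p x _ y hp hx hy). intros n. unfold sub_seq, Cminus.
  rewrite <- (Cmod_opp (y n)). apply Cmod_triangle.
Qed.

Lemma lp_norm_ge0 p x : 0 <= lp_norm p x.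
Proof. apply rpow_ge0. Qed.

Lemma Lim_psum_fin p x B : (forall N, psum p x N <= B) ->
  exists l, Lim_seq (psum p x) = Finite l /\ 0 <= l <= B.
Proof.
  intros h.
  assert (h1 : Rbar_le (Lim_seq (psum p x)) (Lim_seq (fun _ => B))).
  { apply Lim_seq_le_loc. exists 0%nat. intros; auto. }
  assert (h2 : Rbar_le (Lim_seq (fun _ => 0)) (Lim_seq (psum p x))).
  { apply Lim_seq_le_loc. exists 0%nat. intros; apply psum_ge0. }
  rewrite Lim_seq_const in h1, h2.
  destruct (Lim_seq (psum p x)) as [l| |]; simpl in *; try contradiction.
  exists l; auto.
Qed.

Lemma lp_norm_up p x B : 0 < p -> (forall N, psum p x N <= B) -> lp_norm p x <= rpow B (/p).
Proof.
  intros hp h. destruct (Lim_psum_fin p x B h) as [l [E hl]].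
  unfold lp_norm. rewrite E. simpl. apply rpow_mono. apply Rinv_0_lt_compat; auto. lra.
Qed.

Lemma lp_norm_low p x n : 0 < p -> in_lp p x -> Cmod (x n) <= lp_norm p x.
Proof.
  intros hp [M h]. destruct (Lim_psum_fin p x M h) as [l [E hl]].
  assert (h2 : Rbar_le (Lim_seq (fun _ => rpow (Cmod (x n)) p)) (Lim_seq (psum p x))).
  { apply Lim_seq_le_loc. exists (Z.abs_nat n). intros N hN.
    unfold psum.
    assert (Hk : (Z.to_nat (n + Z.of_nat N) <= 2 * N)%nat) by lia.
    eapply Rle_trans; [|apply (sum_ge_term _ _ _ (fun i => rpow_ge0 _ _) Hk)].
    right. f_equal. f_equal. f_equal. lia. }
  rewrite Lim_seq_const, E in h2. simpl in h2.
  unfold lp_norm. rewrite E. simpl.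
  rewrite <- (rpow_inv (Cmod (x n)) p hp (Cmod_ge_0 _)) at 1.
  apply rpow_mono; auto. apply Rinv_0_lt_compat; auto.
Qed.

Definition twopt (r : R) (m : Z) : R :=
  if Z.eq_dec m 0 then r else if Z.eq_dec m (-1) then r else 0.

Definition Ck p := rpow (C2 p * (2 * 1)) (/p).

Lemma twopt_bound p y r : 0 < p -> 0 <= r -> (forall m, Cmod (y m) <= twopt r m) ->
  in_lp p y /\ lp_norm p y <= Ck p * r.
Proof.
  intros hp hr h.
  assert (hd : forall n, Cmod (y n) <= Cmod (single 0 (RtoC r) n) + Cmod (single (-1) (RtoC r) n)).
  { intros n. specialize (h n). unfold twopt, single in *.
    destruct (Z.eq_dec n 0); destruct (Z.eq_dec n (-1)); try lia; rewrite ?Cmod_0, ?Cmod_R, ?Rabs_pos_eq by lra; lra. }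
  split. eapply in_lp_dom; eauto using in_lp_single.
  eapply Rle_trans. apply lp_norm_up with (B := C2 p * (rpow r p + rpow r p)); auto.
  intros N. eapply Rle_trans. apply psum_dom; eauto. apply Rmult_le_compat_l. apply rpow_ge0.
  pose proof (psum_single p 0 r N hp). pose proof (psum_single p (-1) r N hp).
  rewrite Cmod_R, Rabs_pos_eq in * by lra. lra.
  replace (C2 p * (rpow r p + rpow r p)) with ((C2 p * (2*1)) * rpow r p) by ring.
  unfold Ck. rewrite rpow_mult. rewrite rpow_inv; auto. lra.
  apply Rmult_le_pos. apply rpow_ge0. lra. apply rpow_ge0.
Qed.

Lemma BW_R (u : nat -> R) a b : (forall n, a <= u n <= b) ->
  exists (phi : nat -> nat) (l : R), (forall k, (phi k < phi (S k))%nat) /\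
    is_lim_seq (fun k => u (phi k)) l.
Proof.
  intros hu. destruct (Bolzano_Weierstrass u (fun c => a <= c <= b) (compact_P3 a b) hu) as [l hl].
  assert (G : forall (k N : nat), {q : nat | (N <= q)%nat /\ Rabs (u q - l) < / (INR k + 1)}).
  { intros k N. apply constructive_indefinite_description.
    assert (hpos : 0 < / (INR k + 1)) by (apply Rinv_0_lt_compat; pose proof (pos_INR k); lra).
    destruct (hl (disc l (mkposreal _ hpos)) N) as [q [hq1 hq2]].
    - exists (mkposreal _ hpos). intros y hy; exact hy.
    - exists q. split; auto. }
  pose (phi := fix phi (k : nat) : nat := match k with
               | O => proj1_sig (G O O)
               | S k' => proj1_sig (G k (S (phi k'))) end).
  exists phi, l. split.
  - intros k. change (phi (S k)) with (proj1_sig (G (S k) (S (phi k)))). destruct (proj2_sig (G (S k) (S (phi k)))) as [h _]. lia.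
  - assert (hb : forall k, Rabs (u (phi k) - l) < / (INR k + 1)).
    { intros [|k]. exact (proj2 (proj2_sig (G O O))).
      exact (proj2 (proj2_sig (G (S k) (S (phi k))))). }
    apply is_lim_seq_spec. intros eps.
    destruct (archimed_cor1 eps (cond_pos eps)) as [N [hN1 hN2]].
    exists N. intros n hn. eapply Rlt_trans. apply hb.
    eapply Rle_lt_trans; [|apply hN1]. apply Rinv_le_contravar.
    apply lt_0_INR; auto. apply le_INR in hn. lra.
Qed.

Lemma Cmod_le_parts (z : C) : Cmod z <= 2 * (Rabs (fst z) + Rabs (snd z)).
Proof.
  eapply Rle_trans. apply Cmod_2Rmax.
  assert (sqrt 2 <= 2).
  { rewrite <- (sqrt_square 2) at 2 by lra. apply sqrt_le_1; lra. }
  pose proof (Rabs_pos (fst z)). pose proof (Rabs_pos (snd z)).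
  assert (Rmax (Rabs (fst z)) (Rabs (snd z)) <= Rabs (fst z) + Rabs (snd z)).
  { unfold Rmax; destruct Rle_dec; lra. }
  pose proof (sqrt_pos 2). nra.
Qed.

Lemma BW_C (a : nat -> C) B : (forall n, Cmod (a n) <= B) ->
  exists (phi : nat -> nat) (c : C), (forall k, (phi k < phi (S k))%nat) /\
    is_lim_seq (fun k => Cmod (Cminus (a (phi k)) c)) 0.
Proof.
  intros ha.
  assert (h1 : forall n, -B <= fst (a n) <= B).
  { intros n. pose proof (Rmax_Cmod (a n)). specialize (ha n).
    assert (Rabs (fst (a n)) <= B) by (unfold Rmax in *; destruct Rle_dec; lra).
    apply Rabs_le_between in H0. auto. }
  assert (h2 : forall n, -B <= snd (a n) <= B).
  { intros n. pose proof (Rmax_Cmod (a n)). specialize (ha n).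
    assert (Rabs (snd (a n)) <= B) by (unfold Rmax in *; destruct Rle_dec; lra).
    apply Rabs_le_between in H0. auto. }
  destruct (BW_R (fun n => fst (a n)) _ _ h1) as [phi1 [l1 [hp1 hl1]]].
  destruct (BW_R (fun n => snd (a (phi1 n))) _ _ (fun n => h2 (phi1 n))) as [phi2 [l2 [hp2 hl2]]].
  exists (fun k => phi1 (phi2 k)), (l1, l2). split.
  - intros k. assert (forall m n, (m < n)%nat -> (phi1 m < phi1 n)%nat).
    { intros m n hmn. induction hmn. apply hp1. specialize (hp1 m0). lia. }
    apply H. apply hp2.
  - assert (hl1' : is_lim_seq (fun k => fst (a (phi1 (phi2 k)))) l1).
    { apply (is_lim_seq_subseq (fun n => fst (a (phi1 n))) l1 phi2).
      apply eventually_subseq; auto. 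
      exact hl1. }
    assert (hs : is_lim_seq (fun k => 2 * (Rabs (fst (a (phi1 (phi2 k))) - l1) + Rabs (snd (a (phi1 (phi2 k))) - l2))) 0).
    { assert (e1 : is_lim_seq (fun k => fst (a (phi1 (phi2 k))) - l1) (l1 - l1)).
      { apply is_lim_seq_minus'; [exact hl1' | apply is_lim_seq_const]. }
      assert (e2 : is_lim_seq (fun k => snd (a (phi1 (phi2 k))) - l2) (l2 - l2)).
      { apply is_lim_seq_minus'; [exact hl2 | apply is_lim_seq_const]. }
      rewrite Rminus_diag in e1, e2.
      apply is_lim_seq_abs in e1. apply is_lim_seq_abs in e2. simpl in e1, e2. rewrite Rabs_R0 in e1, e2.
      pose proof (is_lim_seq_plus' _ _ _ _ e1 e2) as e3.
      pose proof (is_lim_seq_scal_l _ 2 _ e3) as e4. simpl in e4.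
      replace (2 * (0 + 0)) with 0 in e4 by ring. exact e4. }
    apply is_lim_seq_le_le with (u := fun _ => 0) (w := fun k => 2 * (Rabs (fst (a (phi1 (phi2 k))) - l1) + Rabs (snd (a (phi1 (phi2 k))) - l2))); auto.
    + intros n. split. apply Cmod_ge_0. eapply Rle_trans. apply Cmod_le_parts. right. reflexivity.
    + apply is_lim_seq_const.
Qed.

Definition Kop : op := fun x m =>
  if Z.eq_dec m 0 then Cminus (x 0%Z) (x 1%Z)
  else if Z.eq_dec m (-1) then Cminus (x 1%Z) (x 0%Z) else 0%C.

Definition alpha1 : Z -> C := fun _ => RtoC 1.

Definition Top := op_add (wshift alpha1) Kop.

Lemma Cmod_sub_sym (a b : C) : Cmod (Cminus b a) = Cmod (Cminus a b).
Proof. replace (Cminus b a) with (Copp (Cminus a b)) by ceq. apply Cmod_opp. Qed.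

Lemma Cmod_sub_le (a b : C) : Cmod (Cminus a b) <= Cmod a + Cmod b.
Proof. unfold Cminus. rewrite <- (Cmod_opp b). apply Cmod_triangle. Qed.

Lemma K_twopt x m : Cmod (Kop x m) <= twopt (Cmod (Cminus (x 0%Z) (x 1%Z))) m.
Proof.
  unfold Kop, twopt. destruct Z.eq_dec. lra. destruct Z.eq_dec. rewrite Cmod_sub_sym; lra.
  rewrite Cmod_0; lra.
Qed.

Lemma K_lp p x : 0 < p -> in_lp p (Kop x) /\ lp_norm p (Kop x) <= Ck p * Cmod (Cminus (x 0%Z) (x 1%Z)).
Proof. intros hp. apply twopt_bound; auto. apply Cmod_ge_0. apply K_twopt. Qed.

Lemma K_compact p : 0 < p -> compact_op p Kop.
Proof.
  intros hp. split; [split; [|split]|].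
  - intros x _. apply K_lp; auto.
  - intros x y a _ _ n. unfold Kop. destruct Z.eq_dec. ceq. destruct Z.eq_dec. ceq. ceq.
  - exists (Ck p * 2). intros x hx. eapply Rle_trans. apply K_lp; auto.
    pose proof (lp_norm_low p x 0 hp hx). pose proof (lp_norm_low p x 1 hp hx).
    pose proof (Cmod_sub_le (x 0%Z) (x 1%Z)). pose proof (rpow_ge0 (C2 p * (2*1)) (/p)).
    unfold Ck in *. nra.
  - intros xs hxs.
    destruct (BW_C (fun k => Cminus (xs k 0%Z) (xs k 1%Z)) 2) as [phi [c [hphi hc]]].
    { intros n. destruct (hxs n) as [h1 h2]. eapply Rle_trans. apply Cmod_sub_le.
      pose proof (lp_norm_low p _ 0 hp h1). pose proof (lp_norm_low p _ 1 hp h1). lra. }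
    set (y := fun m : Z => if Z.eq_dec m 0 then c else if Z.eq_dec m (-1) then Copp c else 0%C).
    exists phi, y. split; auto. split.
    + apply (twopt_bound p y (Cmod c) hp (Cmod_ge_0 _)). intros m. unfold y, twopt.
      destruct Z.eq_dec. lra. destruct Z.eq_dec. rewrite Cmod_opp; lra. rewrite Cmod_0; lra.
    + apply is_lim_seq_le_le with (u := fun _ => 0)
        (w := fun k => Ck p * Cmod (Cminus (xs (phi k) 0%Z) (xs (phi k) 1%Z) - c)).
      * intros k. split. apply lp_norm_ge0.
        apply twopt_bound; auto. apply Cmod_ge_0. intros m. unfold sub_seq, Kop, y, twopt.
        destruct Z.eq_dec. lra. destruct Z.eq_dec.
        right. rewrite <- Cmod_opp. f_equal. ceq.
        replace (Cminus 0 0) with (RtoC 0) by ceq. rewrite Cmod_0. lra.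
      * apply is_lim_seq_const.
      * replace (Finite 0) with (Rbar_mult (Ck p) 0) by (simpl; f_equal; ring).
        apply is_lim_seq_scal_l. exact hc.
Qed.

Lemma T_lp p x : 0 < p -> in_lp p x -> in_lp p (Top x).
Proof.
  intros hp hx. apply (in_lp_dom p (fun n => x (n + 1)%Z) _ (Kop x) hp).
  apply in_lp_shift; auto. apply K_lp; auto.
  intros n. unfold Top, op_add, wshift, alpha1. eapply Rle_trans. apply Cmod_triangle.
  rewrite Cmod_mult, Cmod_R, Rabs_R1. lra.
Qed.

Lemma T_0 x : Top x 0%Z = x 0%Z.
Proof. unfold Top, op_add, wshift, alpha1, Kop. simpl. ceq. Qed.

Lemma Titer_0 u k : Nat.iter k Top u 0%Z = u 0%Z.
Proof. induction k; simpl; auto. rewrite T_0; auto. Qed.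

Lemma Titer_lp p u k : 0 < p -> in_lp p u -> in_lp p (Nat.iter k Top u).
Proof. intros hp hu; induction k; simpl; auto. apply T_lp; auto. Qed.

Lemma T_fix : Top (single 0 1%C) = single 0 1%C.
Proof.
  apply functional_extensionality; intros m. unfold Top, op_add, wshift, alpha1, Kop, single.
  destruct (Z.eq_dec m 0) as [->|h0]; simpl. ceq.
  destruct (Z.eq_dec m (-1)) as [->|h1]; simpl. ceq.
  destruct (Z.eq_dec (m+1) 0); [lia|]. ceq.
Qed.

Theorem corollary4p17 (p : R) (hp : 1 <= p) :
  exists (alpha : Z -> C) (K : op),
    (exists M : R, forall n, Cmod (alpha n) <= M) /\
    (forall n, alpha n <> 0%C) /\
    compact_op p K /\
    ~ hypercyclic p (op_add (wshift alpha) K) /\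
    exists (u v : seqZ) (nk : nat -> nat),
      in_lp p u /\ in_lp p v /\ (exists n, v n <> 0%C) /\
      (forall k, (nk k < nk (S k))%nat) /\
      is_lim_seq
        (fun k => lp_norm p (sub_seq (Nat.iter (nk k) (op_add (wshift alpha) K) u) v)) 0.
Proof.
  assert (hp0 : 0 < p) by lra.
  exists alpha1, Kop. split; [|split; [|split; [|split]]].
  - exists 1. intros n. unfold alpha1. rewrite Cmod_R, Rabs_R1. lra.
  - intros n h. unfold alpha1 in h. injection h. lra.
  - apply K_compact; auto.
  - fold Top. intros [u [hu hd]].
    destruct (hd (single 0 (Cplus (u 0%Z) 1)) (in_lp_single p _ _ hp0) 1 ltac:(lra)) as [k hk].
    assert (hl := lp_norm_low p (sub_seq (Nat.iter k Top u) (single 0 (Cplus (u 0%Z) 1))) 0 hp0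
      (in_lp_sub p _ _ hp0 (Titer_lp p u k hp0 hu) (in_lp_single p _ _ hp0))).
    assert (h1 : Cmod (sub_seq (Nat.iter k Top u) (single 0 (Cplus (u 0%Z) 1)) 0%Z) = 1).
    { unfold sub_seq. rewrite Titer_0. unfold single. simpl.
      replace (Cminus (u 0%Z) (Cplus (u 0%Z) 1)) with (Copp 1%C) by ceq.
      rewrite Cmod_opp, Cmod_1. auto. }
    rewrite h1 in hl. lra.
  - fold Top. exists (single 0 1%C), (single 0 1%C), (fun k => k). split; [|split; [|split; [|split]]].
    + apply in_lp_single; auto.
    + apply in_lp_single; auto.
    + exists 0%Z. unfold single. simpl. intros h. injection h. lra.
    + intros; lia.
    + assert (E : forall k, Nat.iter k Top (single 0 1%C) = single 0 1%C).
      { induction k; simpl; auto. rewrite IHk. apply T_fix. }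
      apply is_lim_seq_ext with (u := fun _ => 0). 2: apply is_lim_seq_const.
      intros k. rewrite E. apply Rle_antisym. apply lp_norm_ge0.
      eapply Rle_trans. apply lp_norm_up with (B := 0); auto.
      intros N. unfold psum. rewrite sum_zero. lra. intros i.
      unfold sub_seq. replace (Cminus _ _) with (RtoC 0) by ceq. rewrite Cmod_0. apply rpow_0.
      rewrite rpow_0. lra.
Qed.
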